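(* Let $(\mathfrak g,\{\cdot,\cdot\},E)$ be a pre-ENL algebra and let $L:\mathfrak g\to\mathfrak{gl}(\mathfrak g)$, $L(x)y=\{x,y\}$. Let $\{e_1,\dots,e_n\}$ be a basis of $\mathfrak g$ with dual basis $\{e_1^*,\dots,e_n^*\}$, and set $r:=\sum_{i=1}^n(e_i\otimes e_i^*-e_i^*\otimes e_i)\in(\mathfrak g\ltimes_{L^*}\mathfrak g^* )\otimes(\mathfrak g\ltimes_{L^*}\mathfrak g^* )$. Then $r$ is an EN $r$-matrix in the semidirect product ENL algebra $(\mathfrak g\ltimes_{L^*}\mathfrak g^*,E+E^* )$, i.e. $[\![r,r]\!]=0$ and $((E+E^* )\otimes\mathrm{Id}-\mathrm{Id}\otimes(E+E^* ))(r)=0$.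
   Context: All vector spaces are finite-dimensional over an algebraically closed field of characteristic zero. A pre-Lie algebra $(\mathfrak g,\{\cdot,\cdot\})$ is a vector space with bilinear product satisfying $\{\{x,y\},z\}-\{x,\{y,z\}\}=\{\{y,x\},z\}-\{y,\{x,z\}\}$; its induced (sub-adjacent) Lie bracket is $[x,y]_{\mathfrak g}=\{x,y\}-\{y,x\}$, and $L$ is a representation of this Lie algebra. A pre-ENL algebra $(\mathfrak g,\{\cdot,\cdot\},E)$ is a pre-Lie algebra with linear $E$ such that $E\{x,y\}=\{Ex,y\}=\{x,Ey\}$ for all $x,y$. The dual representation is $\langle L^*(x)\xi,y\rangle=-\langle\xi,L(x)y\rangle$, and $\mathfrak g\ltimes_{L^*}\mathfrak g^*$ is $\mathfrak g\oplus\mathfrak g^*$ with bracket $[x+\xi,y+\eta]=[x,y]_{\mathfrak g}+L^*(x)\eta-L^*(y)\xi$ and operator $(E+E^* )(x+\xi)=Ex+E^*\xi$, where $E^*$ is the dual map. For $r=\sum a_i\otimes b_i$, $[\![r,r]\!]=[r_{12},r_{13}]+[r_{13},r_{23}]+[r_{12},r_{23}]$ in the tensor cube of the universal enveloping algebra of $\mathfrak g\ltimes_{L^*}\mathfrak g^*$. *)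

(* Defs.v *)
(* g = F^n as row vectors 'rV[F]_n; g^* = F^n via the standard
   pairing; the semidirect product g ⋉ g^* = 'rV[F]_(n+n) via row_mx. *)
From HB Require Import structures.
From mathcomp Require Import all_boot all_order all_algebra.
Set Implicit Arguments. Unset Strict Implicit. Unset Printing Implicit Defensive.
Import GRing.Theory.
Local Open Scope ring_scope.

Section Defs.
Variable F : fieldType.
Variable n : nat.

Definition pair (xi y : 'rV[F]_n) : F := \sum_(j < n) xi 0 j * y 0 j.

Definition stdv (m : nat) (j : 'I_m) : 'rV[F]_m := delta_mx 0 j.

Definition bilinear_prod (p : 'rV[F]_n -> 'rV[F]_n -> 'rV[F]_n) : Prop :=
  (forall (a : F) x y z, p (a *: x + y) z = a *: p x z + p y z) /\
  (forall (a : F) x y z, p z (a *: x + y) = a *: p z x + p z y).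

Definition preLie (p : 'rV[F]_n -> 'rV[F]_n -> 'rV[F]_n) : Prop :=
  bilinear_prod p /\
  forall x y z, p (p x y) z - p x (p y z) = p (p y x) z - p y (p x z).

Definition preENL (p : 'rV[F]_n -> 'rV[F]_n -> 'rV[F]_n)
  (E : {linear 'rV[F]_n -> 'rV[F]_n}) : Prop :=
  preLie p /\ forall x y, E (p x y) = p (E x) y /\ E (p x y) = p x (E y).

Definition subadj (p : 'rV[F]_n -> 'rV[F]_n -> 'rV[F]_n) x y := p x y - p y x.

(* dual representation: <L^*(x) xi, y> = - <xi, L(x) y>, L(x) y = {x,y} *)
Definition Ldual (p : 'rV[F]_n -> 'rV[F]_n -> 'rV[F]_n) (x xi : 'rV[F]_n)
  : 'rV[F]_n := \row_j (- pair xi (p x (stdv j))).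

(* dual map: <E^* xi, y> = <xi, E y> *)
Definition Edual (E : 'rV[F]_n -> 'rV[F]_n) (xi : 'rV[F]_n) : 'rV[F]_n :=
  \row_j pair xi (E (stdv j)).

Definition D := 'rV[F]_(n + n).
Definition inj1 (x : 'rV[F]_n) : D := row_mx x 0.
Definition inj2 (xi : 'rV[F]_n) : D := row_mx 0 xi.

Definition brD p (u v : D) : D :=
  row_mx (subadj p (lsubmx u) (lsubmx v))
         (Ldual p (lsubmx u) (rsubmx v) - Ldual p (lsubmx v) (rsubmx u)).

Definition EED (E : 'rV[F]_n -> 'rV[F]_n) (u : D) : D :=
  row_mx (E (lsubmx u)) (Edual E (rsubmx u)).

(* 2-tensors in D ⊗ D: coordinates w.r.t. standard basis f_p ⊗ f_q *)
Definition tens2 (a b : D) : 'M[F]_(n + n) := \matrix_(p, q) (a 0 p * b 0 q).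

(* 3-tensors in D ⊗ D ⊗ D as coordinate functions *)
Definition tens3 (a b c : D) (i j k : 'I_(n + n)) : F := a 0 i * b 0 j * c 0 k.

(* [[r,r]] = [r12,r13] + [r13,r23] + [r12,r23] for
   r = sum_{p,q} r_pq f_p ⊗ f_q, in D^{⊗3} ⊂ U(D)^{⊗3} *)
Definition CYB p (r : 'M[F]_(n + n)) (i j k : 'I_(n + n)) : F :=
  \sum_(a < n + n) \sum_(b < n + n) \sum_(c < n + n) \sum_(d < n + n)
    r a b * r c d *
    ( tens3 (brD p (stdv a) (stdv c)) (stdv b) (stdv d) i j k
    + tens3 (stdv a) (stdv c) (brD p (stdv b) (stdv d)) i j k
    + tens3 (stdv a) (brD p (stdv b) (stdv c)) (stdv d) i j k ).

Definition tmap2 (f g : D -> D) (r : 'M[F]_(n + n)) : 'M[F]_(n + n) :=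
  \sum_(a < n + n) \sum_(b < n + n) r a b *: tens2 (f (stdv a)) (g (stdv b)).

End Defs.

(* Main.v *)
Require Import Defs.
From HB Require Import structures.
From mathcomp Require Import all_boot all_order all_algebra ring.
Import GRing.Theory.
Local Open Scope ring_scope.

Section Aux.
Variable F : fieldType.
Variable n : nat.
Implicit Types (x y : 'rV[F]_n).

Lemma stdvE m (b j : 'I_m) : stdv F b 0 j = (b == j)%:R.
Proof. by rewrite /stdv mxE eqxx /= eq_sym. Qed.

Lemma sum_d1 m (b : 'I_m) (G : 'I_m -> F) : \sum_a (a == b)%:R * G a = G b.
Proof.
rewrite (bigD1 b) //= eqxx mul1r big1 ?addr0 // => a /negbTE ->; exact: mul0r.
Qed.

Lemma sum_d2 m (b : 'I_m) (G : 'I_m -> F) : \sum_a G a * (a == b)%:R = G b.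
Proof.
rewrite (bigD1 b) //= eqxx mulr1 big1 ?addr0 // => a /negbTE ->; exact: mulr0.
Qed.

Lemma sum_d3 m (b : 'I_m) (G : 'I_m -> F) : \sum_a (b == a)%:R * G a = G b.
Proof. by under eq_bigr do rewrite eq_sym; rewrite sum_d1. Qed.

Lemma sum_d4 m (b : 'I_m) (G : 'I_m -> F) : \sum_a G a * (b == a)%:R = G b.
Proof. by under eq_bigr do rewrite eq_sym; rewrite sum_d2. Qed.

Lemma pair_stdv (a : 'I_n) w : pair (stdv F a) w = w 0 a.
Proof. by rewrite /pair; under eq_bigr do rewrite stdvE; rewrite sum_d3. Qed.

Lemma pair0 w : pair (0 : 'rV[F]_n) w = 0.
Proof. by rewrite /pair big1 // => j _; rewrite mxE mul0r. Qed.

Lemma stdv_l (a : 'I_n) : stdv F (lshift n a) = inj1 (stdv F a).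
Proof.
apply/rowP => k; rewrite /inj1 -(splitK k); case: (split k) => c /=.
  by rewrite row_mxEl !stdvE eq_shift.
by rewrite row_mxEr stdvE eq_shift mxE.
Qed.

Lemma stdv_r (a : 'I_n) : stdv F (rshift n a) = inj2 (stdv F a).
Proof.
apply/rowP => k; rewrite /inj2 -(splitK k); case: (split k) => c /=.
  by rewrite row_mxEl stdvE eq_shift mxE.
by rewrite row_mxEr !stdvE eq_shift.
Qed.

Lemma inj1l x a : inj1 x 0 (lshift n a) = x 0 a.
Proof. by rewrite /inj1 row_mxEl. Qed.
Lemma inj1r x a : inj1 x 0 (rshift n a) = 0.
Proof. by rewrite /inj1 row_mxEr mxE. Qed.
Lemma inj2l x a : inj2 x 0 (lshift n a) = 0.
Proof. by rewrite /inj2 row_mxEl mxE. Qed.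
Lemma inj2r x a : inj2 x 0 (rshift n a) = x 0 a.
Proof. by rewrite /inj2 row_mxEr. Qed.
Lemma zerol a : (0 : D F n) 0 a = 0.
Proof. by rewrite mxE. Qed.

Lemma tens2E (a b : D F n) P Q : tens2 a b P Q = a 0 P * b 0 Q.
Proof. by rewrite mxE. Qed.
Lemma subE m k (A B : 'M[F]_(m,k)) i j : (A - B) i j = A i j - B i j.
Proof. by rewrite !mxE. Qed.

Variable p : 'rV[F]_n -> 'rV[F]_n -> 'rV[F]_n.
Hypothesis hp : bilinear_prod p.

Lemma p0r x : p x 0 = 0.
Proof.
have h := (proj2 hp) 1 0 0 x; rewrite scaler0 add0r scale1r in h.
by apply/(addrI (p x 0)); rewrite addr0 -h.
Qed.
Lemma p0l x : p 0 x = 0.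
Proof.
have h := (proj1 hp) 1 0 0 x; rewrite scaler0 add0r scale1r in h.
by apply/(addrI (p 0 x)); rewrite addr0 -h.
Qed.

Lemma Ldual0r x : Ldual p x 0 = 0.
Proof. by apply/rowP => j; rewrite !mxE pair0 oppr0. Qed.
Lemma Ldual0l x : Ldual p 0 x = 0.
Proof. by apply/rowP => j; rewrite !mxE p0l /pair big1 ?oppr0 // => k _; rewrite mxE mulr0. Qed.

Lemma brD11 x y : brD p (inj1 x) (inj1 y) = inj1 (subadj p x y).
Proof. by rewrite /brD /inj1 !row_mxKl !row_mxKr !Ldual0r subrr. Qed.
Lemma brD12 x y : brD p (inj1 x) (inj2 y) = inj2 (Ldual p x y).
Proof. by rewrite /brD /inj1 /inj2 !row_mxKl !row_mxKr Ldual0r /subadj p0r p0l subrr subr0. Qed.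
Lemma brD21 x y : brD p (inj2 x) (inj1 y) = inj2 (- Ldual p y x).
Proof. by rewrite /brD /inj1 /inj2 !row_mxKl !row_mxKr Ldual0r /subadj p0r p0l subrr sub0r. Qed.
Lemma brD22 x y : brD p (inj2 x) (inj2 y) = 0.
Proof. by rewrite /brD /inj2 !row_mxKl !row_mxKr !Ldual0l /subadj p0r subrr row_mx0. Qed.


Section R.
Variables (e estar : 'I_n -> 'rV[F]_n).
Hypothesis hdual : forall i j, pair (estar i) (e j) = (i == j)%:R.

Lemma key (a b : 'I_n) : \sum_i e i 0 a * estar i 0 b = (a == b)%:R.
Proof.
pose Em := \matrix_(i < n, j < n) e i 0 j.
pose Sm := \matrix_(i < n, j < n) estar i 0 j.
have h1 : Sm *m Em^T = 1%:M.
  apply/matrixP => i j; rewrite !mxE -hdual /pair.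
  by apply: eq_bigr => k _; rewrite !mxE.
move/matrixP: (mulmx1C h1) => /(_ a b); rewrite !mxE => <-.
by apply: eq_bigr => k _; rewrite !mxE.
Qed.

Definition rr := \sum_(i < n) (tens2 (inj1 (e i)) (inj2 (estar i))
                         - tens2 (inj2 (estar i)) (inj1 (e i))).

Lemma rrLR a b : rr (lshift n a) (rshift n b) = (a == b)%:R.
Proof.
rewrite /rr summxE -key; apply: eq_bigr => i _.
by rewrite subE !tens2E inj1l inj2r inj2l mul0r subr0.
Qed.
Lemma rrRL a b : rr (rshift n a) (lshift n b) = - (a == b)%:R.
Proof.
rewrite /rr summxE eq_sym -key -sumrN; apply: eq_bigr => i _.
by rewrite subE !tens2E inj1r inj2l inj1l inj2r mul0r sub0r mulrC.
Qed.
Lemma rrLL a b : rr (lshift n a) (lshift n b) = 0.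
Proof.
rewrite /rr summxE big1 // => i _.
by rewrite subE !tens2E !inj2l !inj1l mul0r mulr0 subr0.
Qed.
Lemma rrRR a b : rr (rshift n a) (rshift n b) = 0.
Proof.
rewrite /rr summxE big1 // => i _.
by rewrite subE !tens2E !inj2r !inj1r mul0r mulr0 subr0.
Qed.

Lemma rowL a (G : 'I_(n+n) -> F) : \sum_b rr (lshift n a) b * G b = G (rshift n a).
Proof.
rewrite big_split_ord /= big1 ?add0r; last by move=> b _; rewrite rrLL mul0r.
by under eq_bigr do rewrite rrLR; rewrite sum_d3.
Qed.
Lemma rowR a (G : 'I_(n+n) -> F) : \sum_b rr (rshift n a) b * G b = - G (lshift n a).
Proof.
rewrite big_split_ord /= [X in _ + X]big1 ?addr0; last by move=> b _; rewrite rrRR mul0r.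
under eq_bigr do rewrite rrRL mulNr; by rewrite sumrN sum_d3.
Qed.
Lemma colL a (G : 'I_(n+n) -> F) : \sum_b rr b (lshift n a) * G b = - G (rshift n a).
Proof.
rewrite big_split_ord /= big1 ?add0r; last by move=> b _; rewrite rrLL mul0r.
under eq_bigr do rewrite rrRL mulNr; by rewrite sumrN sum_d1.
Qed.
Lemma colR a (G : 'I_(n+n) -> F) : \sum_b rr b (rshift n a) * G b = G (lshift n a).
Proof.
rewrite big_split_ord /= [X in _ + X]big1 ?addr0; last by move=> b _; rewrite rrRR mul0r.
by under eq_bigr do rewrite rrLR; rewrite sum_d1.
Qed.
End R.

Lemma CYB3 (M : 'M[F]_(n+n)) i j k : CYB p M i j k =
  \sum_a M a j * (\sum_c M c k * brD p (stdv F a) (stdv F c) 0 i)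
+ \sum_b M i b * (\sum_d M j d * brD p (stdv F b) (stdv F d) 0 k)
+ \sum_b M i b * (\sum_c M c k * brD p (stdv F b) (stdv F c) 0 j).
Proof.
rewrite /CYB /tens3.
under eq_bigr => a _ do under eq_bigr => b _ do under eq_bigr => c _ do
  under eq_bigr => d _ do rewrite !mulrDr.
under eq_bigr => a _ do under eq_bigr => b _ do under eq_bigr => c _ do
  rewrite !big_split.
under eq_bigr => a _ do under eq_bigr => b _ do rewrite !big_split.
under eq_bigr => a _ do rewrite !big_split.
rewrite !big_split /=.
congr (_ + _ + _).
- apply: eq_bigr => a _.
  rewrite (bigD1 j) //= [X in _ + X]big1 ?addr0; last first.
    move=> b nb; apply: big1 => c _; apply: big1 => d _.
    by rewrite [stdv F b 0 j]stdvE (negbTE nb) !(mulr0, mul0r).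
  rewrite mulr_sumr; apply: eq_bigr => c _.
  rewrite (bigD1 k) //= [X in _ + X]big1 ?addr0; last first.
    by move=> d nd; rewrite [stdv F d 0 k]stdvE (negbTE nd) !(mulr0, mul0r).
  by rewrite !stdvE !eqxx !mulr1 mulrA.
- rewrite (bigD1 i) //= [X in _ + X]big1 ?addr0; last first.
    move=> a na; apply: big1 => b _; apply: big1 => c _; apply: big1 => d _.
    by rewrite [stdv F a 0 i]stdvE (negbTE na) !(mulr0, mul0r).
  apply: eq_bigr => b _.
  rewrite (bigD1 j) //= [X in _ + X]big1 ?addr0; last first.
    move=> c nc; apply: big1 => d _.
    by rewrite [stdv F c 0 j]stdvE (negbTE nc) !(mulr0, mul0r).
  rewrite mulr_sumr; apply: eq_bigr => d _.
  by rewrite !stdvE !eqxx !mul1r mulrA.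
- rewrite (bigD1 i) //= [X in _ + X]big1 ?addr0; last first.
    move=> a na; apply: big1 => b _; apply: big1 => c _; apply: big1 => d _.
    by rewrite [stdv F a 0 i]stdvE (negbTE na) !(mulr0, mul0r).
  apply: eq_bigr => b _.
  rewrite mulr_sumr; apply: eq_bigr => c _.
  rewrite (bigD1 k) //= [X in _ + X]big1 ?addr0; last first.
    by move=> d nd; rewrite [stdv F d 0 k]stdvE (negbTE nd) !(mulr0, mul0r).
  by rewrite !stdvE !eqxx !mulr1 !mul1r mulrA.
Qed.

Lemma tmapE (M : 'M[F]_(n+n)) f g P Q :
  tmap2 f g M P Q = \sum_a \sum_b M a b * (f (stdv F a) 0 P * g (stdv F b) 0 Q).
Proof.
rewrite summxE; apply: eq_bigr => a _; rewrite summxE; apply: eq_bigr => b _.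
by rewrite mxE tens2E.
Qed.

Lemma tmap_idl (M : 'M[F]_(n+n)) g P Q :
  tmap2 id g M P Q = \sum_b M P b * g (stdv F b) 0 Q.
Proof.
rewrite tmapE (bigD1 P) //= [X in _ + X]big1 ?addr0; last first.
  by move=> a na; apply: big1 => b _; rewrite stdvE (negbTE na) !(mulr0, mul0r).
by apply: eq_bigr => b _; rewrite stdvE eqxx mul1r.
Qed.

Lemma tmap_idr (M : 'M[F]_(n+n)) f P Q :
  tmap2 f id M P Q = \sum_a M a Q * f (stdv F a) 0 P.
Proof.
rewrite tmapE; apply: eq_bigr => a _.
rewrite (bigD1 Q) //= [X in _ + X]big1 ?addr0; last first.
  by move=> b nb; rewrite stdvE (negbTE nb) !(mulr0, mul0r).
by rewrite stdvE eqxx mulr1 mulrC.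
Qed.

Variable E : {linear 'rV[F]_n -> 'rV[F]_n}.
Lemma Edual0 : Edual E 0 = 0.
Proof. by apply/rowP => j; rewrite !mxE pair0. Qed.
Lemma EED1 x : EED E (inj1 x) = inj1 (E x).
Proof. by rewrite /EED /inj1 row_mxKl row_mxKr Edual0. Qed.
Lemma EED2 x : EED E (inj2 x) = inj2 (Edual E x).
Proof. by rewrite /EED /inj2 row_mxKl row_mxKr linear0. Qed.
Lemma EdualE a b : Edual E (stdv F a) 0 b = E (stdv F b) 0 a.
Proof. by rewrite mxE pair_stdv. Qed.
Lemma LdualE x y b : Ldual p x y 0 b = - pair y (p x (stdv F b)).
Proof. by rewrite mxE. Qed.
Lemma oppE m (v : 'rV[F]_m) b : (- v) 0 b = - v 0 b.
Proof. by rewrite mxE. Qed.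
Lemma subadjE x y b : subadj p x y 0 b = p x y 0 b - p y x 0 b.
Proof. by rewrite /subadj subE. Qed.

Lemma EN_part (e estar : 'I_n -> 'rV[F]_n)
  (hdual : forall i j, pair (estar i) (e j) = (i == j)%:R) :
  tmap2 (EED E) id (rr e estar) - tmap2 id (EED E) (rr e estar) = 0.
Proof.
apply/matrixP => P Q; rewrite subE tmap_idl tmap_idr mxE.
rewrite -(splitK P) -(splitK Q); case: (split P) => a; case: (split Q) => b /=;
rewrite ?colL ?colR ?rowL ?rowR // !(stdv_l, stdv_r, EED1, EED2, inj1l, inj1r, inj2l, inj2r, EdualE);
by rewrite ?(oppr0, subrr, addr0).
Qed.

Lemma CYB_part (e estar : 'I_n -> 'rV[F]_n)
  (hdual : forall i j, pair (estar i) (e j) = (i == j)%:R) i j k :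
  CYB p (rr e estar) i j k = 0.
Proof.
rewrite CYB3.
rewrite -(splitK i) -(splitK j) -(splitK k);
case: (split i) => a; case: (split j) => b; case: (split k) => c /=;
rewrite ?colL ?colR ?rowL ?rowR //= ?colL ?colR ?rowL ?rowR //=;
rewrite !(stdv_l, stdv_r, brD11, brD12, brD21, brD22, inj1l, inj1r, inj2l, inj2r, zerol, oppE, LdualE, subadjE, pair_stdv).
all: ring.
Qed.
End Aux.

Theorem theorem7p8 (F : closedFieldType) (hchar : [pchar F] =i pred0) (n : nat)
  (p : 'rV[F]_n -> 'rV[F]_n -> 'rV[F]_n) (E : {linear 'rV[F]_n -> 'rV[F]_n})
  (hENL : preENL p E)
  (e estar : 'I_n -> 'rV[F]_n)
  (hbasis : row_free (\matrix_(i < n) e i))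
  (hdual : forall i j, pair (estar i) (e j) = (i == j)%:R) :
  let r := \sum_(i < n) (tens2 (inj1 (e i)) (inj2 (estar i))
                         - tens2 (inj2 (estar i)) (inj1 (e i))) in
  (forall i j k, CYB p r i j k = 0) /\
  tmap2 (EED E) id r - tmap2 id (EED E) r = 0.
Proof.
move=> r; split.
  move=> i j k; exact (@CYB_part _ _ p (proj1 (proj1 hENL)) e estar hdual i j k).
exact (@EN_part _ _ E e estar hdual).
Qed.
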